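(* Let $s\in\{0,\tfrac12\}$, $\lambda\in\mathbb{C}$, and let $\sigma\in\mathrm{Aut}(\mathfrak{L}^s_\lambda)$ be normalized, i.e. there are $\epsilon\in\{1,-1\}$, $\alpha,\mu\in\mathbb{C}\setminus\{0\}$, $\beta\in\mathbb{C}$ with $\sigma(L_m)=\epsilon\alpha^mL_{\epsilon m}+m\alpha^m\beta I_{\epsilon m}$ and $\sigma(I_m)=\alpha^m\mu I_{\epsilon m}$ for all $m\in\mathbb{Z}$. Then for every $p\in s+\mathbb{Z}$ there is $h_p\in\mathbb{C}$ with $\sigma(H_p)=h_pH_{\epsilon p}$.
   Context: For $s\in\{0,\tfrac12\}$ and $\lambda\in\mathbb{C}$, $\mathfrak{L}^s_\lambda$ is the complex Lie superalgebra with basis $\{L_m,I_m,G_p,H_p : m\in\mathbb{Z},\ p\in s+\mathbb{Z}\}$, even part spanned by the $L_m,I_m$, odd part spanned by the $G_p,H_p$, with brackets $[L_m,L_n]=(m-n)L_{m+n}$, $[L_m,I_n]=(m-n)I_{m+n}$, $[L_m,H_p]=(\tfrac m2-p)H_{m+p}$, $[L_m,G_p]=(\tfrac m2-p)G_{m+p}+\lambda(m+1)H_{m+p}$, $[I_m,G_p]=(m-2p)H_{m+p}$, $[G_p,G_q]=I_{p+q}$, plus super-antisymmetry; all other brackets of basis elements are zero. $\mathrm{Aut}(\mathfrak{L})$ is the group of bijective parity-preserving linear maps $\sigma$ with $\sigma([x,y])=[\sigma(x),\sigma(y)]$. *)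

(* Defs.v *)
From HB Require Import structures.
From mathcomp Require Import all_boot all_order all_algebra.
Set Implicit Arguments. Unset Strict Implicit. Unset Printing Implicit Defensive.
Import Order.TTheory GRing.Theory Num.Theory.
Local Open Scope ring_scope.

(* Basis of L^s_lambda.  [bG k] stands for G_{k+s}, [bH k] for H_{k+s},
   where s = 1/2 if the boolean [hs] is true and s = 0 otherwise. *)
Inductive B := bL of int | bI of int | bG of int | bH of int.

Definition B_enc (b : B) : nat * int :=
  match b with bL m => (0%N, m) | bI m => (1%N, m) | bG m => (2%N, m) | bH m => (3%N, m) end.
Definition B_dec (x : nat * int) : option B :=
  match x with
  | (0%N, m) => Some (bL m) | (1%N, m) => Some (bI m)
  | (2%N, m) => Some (bG m) | (3%N, m) => Some (bH m) | _ => None end.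
Lemma B_encK : pcancel B_enc B_dec. Proof. by case. Qed.
HB.instance Definition _ := Equality.copy B (pcan_type B_encK).

Definition oddB (b : B) : bool := match b with bG _ | bH _ => true | _ => false end.

Section Alg.
Variable F : fieldType.

(* elements of the superalgebra: finite formal linear combinations of basis
   elements; two combinations are equal iff all coefficients agree *)
Definition vec := seq (F * B).
Definition coef (v : vec) (b : B) : F := \sum_(x <- v | x.2 == b) x.1.
Definition veq (v w : vec) : Prop := forall b, coef v b = coef w b.
Definition scalev (a : F) (v : vec) : vec := [seq (a * y.1, y.2) | y <- v].

Definition ext (f : B -> vec) (v : vec) : vec :=
  flatten [seq scalev x.1 (f x.2) | x <- v].

Variables (hs : bool) (lam : F).

Definition pval (k : int) : F := k%:~R + (if hs then 2^-1 else 0).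
Definition ms (m : int) : F := m%:~R.

Definition br (b b' : B) : vec :=
  match b, b' with
  | bL m, bL n => [:: (ms (m - n), bL (m + n))]
  | bL m, bI n => [:: (ms (m - n), bI (m + n))]
  | bI n, bL m => [:: (- ms (m - n), bI (m + n))]
  | bL m, bH k => [:: (ms m / 2 - pval k, bH (m + k))]
  | bH k, bL m => [:: (- (ms m / 2 - pval k), bH (m + k))]
  | bL m, bG k => [:: (ms m / 2 - pval k, bG (m + k));
                     (lam * ms (m + 1), bH (m + k))]
  | bG k, bL m => [:: (- (ms m / 2 - pval k), bG (m + k));
                     (- (lam * ms (m + 1)), bH (m + k))]
  | bI m, bG k => [:: (ms m - 2 * pval k, bH (m + k))]
  | bG k, bI m => [:: (- (ms m - 2 * pval k), bH (m + k))]
  | bG k, bG k' => [:: (1, bI (k + k' + (hs : nat)%:Z))]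
  | _, _ => [::]
  end.

Definition brv (v w : vec) : vec :=
  flatten [seq scalev (x.1 * y.1) (br x.2 y.2) | x <- v, y <- w].

(* sigma (given by its values on the basis) is an automorphism of L^s_lambda:
   parity preserving, bijective (as a linear map) and a homomorphism *)
Definition is_aut (sigma : B -> vec) : Prop :=
  [/\ (forall b b', coef (sigma b) b' != 0 -> oddB b' = oddB b),
      (forall v, (forall b, coef (ext sigma v) b = 0) -> forall b, coef v b = 0),
      (forall w, exists v, veq (ext sigma v) w)
    & (forall b b', veq (ext sigma (br b b')) (brv (sigma b) (sigma b')))].

End Alg.

Definition epsF (F : fieldType) (eps : bool) : F := if eps then 1 else -1.
Definition epsI (eps : bool) (m : int) : int := if eps then m else - m.
(* index k' with eps*(k+s) = k'+s *)
Definition epsO (hs eps : bool) (k : int) : int := if eps then k else - k - (hs : nat)%:Z.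

(* Main.v *)
Require Import Defs.
From HB Require Import structures.
From mathcomp Require Import all_boot all_order all_algebra.
Import Order.TTheory GRing.Theory Num.Theory.
Local Open Scope ring_scope.
Set Implicit Arguments. Unset Strict Implicit.

Section Helpers.
Variable F : fieldType.
Implicit Types (v w : vec F) (f : B -> F).

Definition lin f v : F := \sum_(x <- v) x.1 * f x.2.

Lemma coef_nil b : coef ([::] : vec F) b = 0.
Proof. by rewrite /coef big_nil. Qed.

Lemma coef_cons a c v b : coef ((a, c) :: v) b = (if c == b then a else 0) + coef v b.
Proof. by rewrite /coef big_cons /=; case: eqP => _; rewrite ?add0r. Qed.

Lemma coef_cat v w b : coef (v ++ w) b = coef v b + coef w b.
Proof. by rewrite /coef big_cat. Qed.

Lemma coef_flatten (l : seq (vec F)) b : coef (flatten l) b = \sum_(u <- l) coef u b.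
Proof.
elim: l => [|u l IH]; first by rewrite big_nil coef_nil.
by rewrite /= coef_cat IH big_cons.
Qed.

Lemma coef_scalev a v b : coef (scalev a v) b = a * coef v b.
Proof. by rewrite /coef /scalev big_map mulr_sumr. Qed.

Lemma coef_ext (s : B -> vec F) v b : coef (ext s v) b = lin (fun c => coef (s c) b) v.
Proof.
rewrite /ext coef_flatten big_map /lin; apply: eq_bigr => x _.
by rewrite coef_scalev.
Qed.

Lemma coef_brv hs lam v w b :
  coef (brv hs lam v w) b = lin (fun c => lin (fun d => coef (br hs lam c d) b) w) v.
Proof.
rewrite /brv coef_flatten big_allpairs_dep /lin; apply: eq_bigr => x _.
rewrite mulr_sumr; apply: eq_bigr => y _.
by rewrite coef_scalev mulrA.
Qed.

Lemma sum_eqB (U : seq B) d (g : B -> F) : uniq U ->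
  \sum_(c <- U) (if d == c then g c else 0) = if d \in U then g d else 0.
Proof.
elim: U => [|c U IH]; first by rewrite big_nil.
rewrite big_cons /= => /andP [cU uU]; rewrite IH // in_cons.
case: eqP => [->|_] /=; last by rewrite add0r.
by rewrite (negbTE cU) addr0.
Qed.

Lemma lin_U (U : seq B) f v : uniq U ->
  (forall x, x \in v -> x.2 \in U \/ f x.2 = 0) ->
  lin f v = \sum_(c <- U) coef v c * f c.
Proof.
move=> uU; elim: v => [|[a d] v IH] H.
  by rewrite /lin big_nil big1 // => c _; rewrite coef_nil mul0r.
rewrite /lin big_cons -/(lin f v) IH; last by move=> x xv; apply: H; rewrite in_cons xv orbT.
under [X in _ = X]eq_bigr => c _ do rewrite coef_cons mulrDl.
rewrite big_split /=; congr (_ + _).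
rewrite (eq_bigr (fun c => if d == c then a * f c else 0)); last first.
  by move=> c _; case: eqP => _; rewrite ?mul0r.
rewrite (@sum_eqB U d (fun c => a * f c)) //.
have := H (a, d); rewrite in_cons eqxx /= => /(_ isT) [->//|->].
by case: ifP; rewrite mulr0.
Qed.

Lemma lin_veq f v v' : veq v v' -> lin f v = lin f v'.
Proof.
move=> e; set U := undup (map snd (v ++ v')).
have uU : uniq U by apply: undup_uniq.
rewrite (@lin_U U) //; last first.
  by move=> x xv; left; rewrite mem_undup map_cat mem_cat (map_f snd xv).
rewrite (@lin_U U) //; last first.
  by move=> x xv; left; rewrite mem_undup map_cat mem_cat (map_f snd xv) orbT.
by apply: eq_bigr => c _; rewrite e.
Qed.

Lemma lin1 f c0 v : (forall c, c != c0 -> f c = 0) -> lin f v = coef v c0 * f c0.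
Proof.
move=> H; rewrite (@lin_U [:: c0]) //; first by rewrite big_seq1.
move=> x _; case: (eqVneq x.2 c0) => [->|/H]; [left; exact: mem_head | by right].
Qed.

Lemma lin2 f c0 c1 v : c0 != c1 -> (forall c, c != c0 -> c != c1 -> f c = 0) ->
  lin f v = coef v c0 * f c0 + coef v c1 * f c1.
Proof.
move=> n01 H; rewrite (@lin_U [:: c0; c1]) /=; first by rewrite big_cons big_seq1.
  by rewrite inE n01.
move=> x _; case: (eqVneq x.2 c0) => [->|n0]; first by left; rewrite !inE eqxx.
case: (eqVneq x.2 c1) => [->|n1]; first by left; rewrite !inE eqxx orbT.
by right; apply: H.
Qed.

Lemma lin_cons f a c v : lin f ((a, c) :: v) = a * f c + lin f v.
Proof. by rewrite /lin big_cons. Qed.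
Lemma lin_nil f : lin f [::] = 0.
Proof. by rewrite /lin big_nil. Qed.

End Helpers.
From mathcomp Require Import ring zify.

Lemma intr_neq0 (F : fieldType) (charF0 : [pchar F] =i pred0) (z : int) :
  z != 0 -> (z%:~R : F) != 0.
Proof.
have P := (pcharf0P F).1 charF0.
case: z => n Hn.
  by rewrite /= P; apply: contra Hn => /eqP ->.
by rewrite NegzE mulrNz oppr_eq0 /= P.
Qed.

Lemma two_neq0 (F : fieldType) (charF0 : [pchar F] =i pred0) : (2 : F) != 0.
Proof. by have := (pcharf0P F).1 charF0 2%N; rewrite /= => ->. Qed.

Lemma epsIK eps m : epsI eps (epsI eps m) = m.
Proof. by case: eps; rewrite /= ?opprK. Qed.

Lemma Gcalc (F : fieldType) (charF0 : [pchar F] =i pred0) (hs : bool) q :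
  ms F (2 * q + (hs : nat)%:Z + 1) - 2 * pval F hs q = 1.
Proof.
have h2 := two_neq0 charF0.
rewrite /ms /pval; case: hs => /=; rewrite !rmorphD /= !rmorphM /=.
  by field.
by ring.
Qed.

Lemma Hcalc (F : fieldType) (charF0 : [pchar F] =i pred0) (hs eps : bool) q k :
  2 * (epsF F eps * pval F hs q - pval F hs k) =
  (if eps then 2 * q - 2 * k else - (2 * q + 2 * k + 2 * (hs : nat)%:Z))%:~R.
Proof.
have h2 := two_neq0 charF0.
rewrite /epsF /pval; case: eps; case: hs => /=; rewrite ?rmorphD ?rmorphN ?rmorphB /= ?rmorphD ?rmorphM /=;
  idtac.
all: by field.
Qed.

Unset Implicit Arguments. Set Strict Implicit.
Theorem lemma3p4 (F : closedFieldType) (charF0 : [pchar F] =i pred0)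
  (hs : bool) (lam : F) (sigma : B -> vec F)
  (eps : bool) (alpha mu beta : F) (alpha0 : alpha != 0) (mu0 : mu != 0) :
  is_aut hs lam sigma ->
  (forall m : int, veq (sigma (bL m))
      [:: (epsF F eps * alpha ^ m, bL (epsI eps m));
          (m%:~R * alpha ^ m * beta, bI (epsI eps m))]) ->
  (forall m : int, veq (sigma (bI m)) [:: (alpha ^ m * mu, bI (epsI eps m))]) ->
  forall k : int, exists h : F, veq (sigma (bH k)) [:: (h, bH (epsO hs eps k))].
Proof.
case=> Hpar _ _ Hhom HL HI k.
set S := sigma (bH k).
have HG : forall q, coef S (bG q) = 0.
  move=> q.
  set m' := 2 * q + (hs : nat)%:Z + 1.
  have := Hhom (bI (epsI eps m')) (bH k) (bH (m' + q)).
  rewrite /= coef_nil coef_brv (lin_veq _ (HI _)) lin_cons lin_nil addr0 epsIK.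
  rewrite (@lin1 _ _ (bG q)); last first.
    case=> n Hn; rewrite /= ?coef_nil ?coef_cons ?coef_nil //;
      (case: eqP => [e|_]; last by rewrite addr0); try discriminate e.
    by case: e => /addrI e; rewrite e eqxx in Hn.
  rewrite /= coef_cons coef_nil eqxx addr0 Gcalc // mulr1.
  move/esym/eqP; rewrite !mulf_eq0 (negbTE mu0) (negbTE (expfz_neq0 _ alpha0)) /=.
  by move/eqP.
set k' := epsO hs eps k.
exists (coef S (bH k')) => b; rewrite coef_cons coef_nil addr0.
case: b => q.
- case: eqP => // _; apply/eqP; apply: contraT => /Hpar //.
- case: eqP => // _; apply/eqP; apply: contraT => /Hpar //.
- by rewrite HG; case: eqP.
case: eqP => [[->]//|nq].
have := Hhom (bL 0) (bH k) (bH q).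
rewrite /= coef_ext lin_cons lin_nil addr0 add0r.
rewrite coef_brv (lin_veq _ (HL _)) !lin_cons lin_nil addr0.
Show.
have e0 : epsI eps 0 = 0 by rewrite /epsI; case: ifP => _; rewrite ?oppr0.
rewrite e0 mulr0z !mul0r addr0 expr0z mulr1.
rewrite (@lin2 _ _ (bH q) (bG q)) //; last first.
  case=> n H1 H2; rewrite /= ?coef_cons ?coef_nil //.
  - by case: eqP => [e|_]; [discriminate e | rewrite addr0].
  - by case: eqP => [e|_]; [discriminate e | rewrite addr0].
  - case: eqP => [e|_]; first discriminate e.
    case: eqP => [[e]|_]; last by rewrite !addr0.
    by move: e; rewrite ?add0r => e; rewrite e eqxx in H2.
  - case: eqP => [[e]|_]; last by rewrite addr0.
    by move: e; rewrite ?add0r => e; rewrite e eqxx in H1.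
rewrite -/S HG mul0r addr0 /=.
rewrite coef_cons coef_nil !add0r eqxx addr0 /ms mulr0z mul0r sub0r => E.
have E2 : coef S (bH q) * (2 * (epsF F eps * pval F hs q - pval F hs k)) =
  2 * ((- pval F hs k) * coef S (bH q) - epsF F eps * (coef S (bH q) * - pval F hs q)).
  by ring.
move: E2; rewrite E subrr mulr0 Hcalc // => /eqP; rewrite mulf_eq0 => /orP [/eqP //|].
move/eqP => h; exfalso; move: h; apply/eqP; apply: intr_neq0 => //.
move: nq; rewrite /k' /epsO; clear - charF0; case: eps => nq.
  by apply/eqP => h; apply: nq; congr bH; lia.
by apply/eqP => h; apply: nq; congr bH; lia.
Qed.
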